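(* The bi-immune symmetric group $G_{\mathfrak{B}}$ is closed in $(\mathrm{Sym}(\mathbb{N}), d)$ if and only if $G_{\mathfrak{B}} = \mathrm{Sym}(\mathbb{N})$.
   Context: $\mathbb{N}$ denotes the non-negative integers, and $\mathrm{Sym}(\mathbb{N})$ the group of all permutations of $\mathbb{N}$ under composition ($g \circ f$ means apply $f$ first). For $\sigma, \tau \in \mathrm{Sym}(\mathbb{N})$ let $\rho(\sigma,\tau) = 0$ if $\sigma = \tau$, and otherwise $\rho(\sigma,\tau) = 2^{-j}$ where $j$ is the least $i$ with $\sigma(i) \neq \tau(i)$; set $d(\sigma,\tau) = \max\{\rho(\sigma,\tau), \rho(\sigma^{-1},\tau^{-1})\}$, a complete metric inducing the pointwise convergence topology. For $i \in \mathbb{N}$, $\sigma_{(i)}$ is the permutation swapping $i$ and $i+1$ and fixing all other numbers. For $A \subseteq \mathbb{N}$ with increasing enumeration $a_0 < a_1 < \cdots$, define $\sigma_A(x) = \lim_{n \to \infty} (\sigma_{(a_0)} \circ \sigma_{(a_1)} \circ \cdots \circ \sigma_{(a_n)})(x)$ (eventually constant for each $x$). A set $A$ is immune if it is infinite and contains no infinite computably enumerable subset; $A$ is bi-immune if both $A$ and $\mathbb{N} - A$ are immune. For bi-immune $A$, $\sigma_A$ is a permutation of $\mathbb{N}$. The bi-immune symmetric group $G_{\mathfrak{B}}$ is the subgroup of $\mathrm{Sym}(\mathbb{N})$ generated by $\{\sigma_A : A \text{ bi-immune}\}$. *)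

(* Defs.v *)
From Stdlib Require Import Reals List Arith Classical ClassicalEpsilon.
Open Scope R_scope.

(* Untyped syntax acting on argument lists (missing arguments default to 0). *)
Inductive prf : Type :=
| PZero : prf
| PSucc : prf
| PProj : nat -> prf
| PComp : prf -> list prf -> prf
| PPrec : prf -> prf -> prf
| PMu   : prf -> prf.

Inductive peval : prf -> list nat -> nat -> Prop :=
| ev_zero v : peval PZero v 0
| ev_succ v : peval PSucc v (S (hd 0%nat v))
| ev_proj i v : peval (PProj i) v (nth i v 0%nat)
| ev_comp f gs v ws y :
    pevals gs v ws -> peval f ws y -> peval (PComp f gs) v y
| ev_prec0 f g v y : peval f v y -> peval (PPrec f g) (0%nat :: v) y
| ev_precS f g n v r y :
    peval (PPrec f g) (n :: v) r -> peval g (n :: r :: v) y ->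
    peval (PPrec f g) (S n :: v) y
| ev_mu f v n :
    peval f (n :: v) 0%nat ->
    (forall m, (m < n)%nat -> exists k, k <> 0%nat /\ peval f (m :: v) k) ->
    peval (PMu f) v n
with pevals : list prf -> list nat -> list nat -> Prop :=
| evs_nil v : pevals nil v nil
| evs_cons g gs v w ws :
    peval g v w -> pevals gs v ws -> pevals (g :: gs) v (w :: ws).

Definition ce (W : nat -> Prop) : Prop :=
  exists e : prf, forall x, W x <-> exists y, peval e (x :: nil) y.

Definition infinite_set (A : nat -> Prop) : Prop :=
  forall n, exists m, (n <= m)%nat /\ A m.

Definition immune (A : nat -> Prop) : Prop :=
  infinite_set A /\
  ~ (exists W, ce W /\ infinite_set W /\ forall x, W x -> A x).

Definition bi_immune (A : nat -> bool) : Prop :=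
  immune (fun x => A x = true) /\ immune (fun x => A x = false).

Definition swap (i x : nat) : nat :=
  if Nat.eqb x i then S i else if Nat.eqb x (S i) then i else x.

(* partial_comp A m = sigma_(a_0) o sigma_(a_1) o ... o sigma_(a_k)
   where a_0 < ... < a_k enumerate the elements of A below m. *)
Fixpoint partial_comp (A : nat -> bool) (m : nat) : nat -> nat :=
  match m with
  | O => fun x => x
  | S m' => if A m' then (fun x => partial_comp A m' (swap m' x))
            else partial_comp A m'
  end.

Definition is_sigma (A : nat -> bool) (f : nat -> nat) : Prop :=
  forall x, exists N, forall m, (N <= m)%nat -> partial_comp A m x = f x.

Record perm : Type := Perm {
  fw : nat -> nat;
  bw : nat -> nat;
  fw_bw : forall x, fw (bw x) = x;
  bw_fw : forall x, bw (fw x) = x }.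

Inductive GBf : (nat -> nat) -> Prop :=
| GB_id : GBf (fun x => x)
| GB_gen A f : bi_immune A -> is_sigma A f -> GBf f
| GB_comp f g : GBf f -> GBf g -> GBf (fun x => g (f x))
| GB_inv f g : GBf f -> (forall x, f (g x) = x) -> (forall x, g (f x) = x) -> GBf g
| GB_ext f g : GBf f -> (forall x, f x = g x) -> GBf g.

Definition G_B (s : perm) : Prop := GBf (fw s).

Definition least_diff (f g : nat -> nat) : nat :=
  epsilon (inhabits 0%nat)
    (fun j => f j <> g j /\ forall i, (i < j)%nat -> f i = g i).

Definition rho (f g : nat -> nat) : R :=
  if excluded_middle_informative (exists i, f i <> g i)
  then (/ 2) ^ (least_diff f g) else 0.

Definition d (s t : perm) : R := Rmax (rho (fw s) (fw t)) (rho (bw s) (bw t)).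

Definition closed_d (S : perm -> Prop) : Prop :=
  forall s, ~ S s -> exists eps, eps > 0 /\ forall t, d s t < eps -> ~ S t.

(* Main.v *)
Require Import Defs.
From Stdlib Require Import Reals Lra Lia Arith List Classical ClassicalEpsilon Cantor.
Local Open Scope nat_scope.

Ltac eqbs := repeat match goal with
  | |- context [Nat.eqb ?a ?b] => destruct (Nat.eqb_spec a b)
  | H : context [Nat.eqb ?a ?b] |- _ => destruct (Nat.eqb_spec a b)
  end.

Lemma swap_invol i x : swap i (swap i x) = x.
Proof. unfold swap; eqbs; lia. Qed.

Lemma swap_far i x : x < i \/ S i < x -> swap i x = x.
Proof. intro; unfold swap; eqbs; lia. Qed.

Fixpoint partial_inv (A : nat -> bool) (m : nat) : nat -> nat :=
  match m with
  | O => fun x => x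
  | S m' => if A m' then (fun x => swap m' (partial_inv A m' x))
            else partial_inv A m'
  end.

Lemma pc_pi A m y : partial_comp A m (partial_inv A m y) = y.
Proof. revert y; induction m; intro y; simpl; auto.
  destruct (A m); auto. rewrite swap_invol; auto. Qed.

Lemma pi_pc A m x : partial_inv A m (partial_comp A m x) = x.
Proof. revert x; induction m; intro x; simpl; auto.
  destruct (A m); auto. rewrite IHm, swap_invol; auto. Qed.

Lemma pc_high A m z : S m <= z -> partial_comp A m z = z.
Proof. induction m; intro H; simpl; auto.
  destruct (A m); [rewrite swap_far by lia|]; apply IHm; lia. Qed.

Lemma pc_stab A x m : S x <= m -> partial_comp A m x = partial_comp A (S x) x.
Proof. induction 1; auto. simpl. destruct (A m); auto.
  rewrite swap_far by lia; auto. Qed.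

Definition sig_f (A : nat -> bool) (x : nat) := partial_comp A (S x) x.

Lemma sig_is A : is_sigma A (sig_f A).
Proof. intro x. exists (S x). intros m Hm. apply pc_stab; auto. Qed.

Lemma sig_inj A x y : sig_f A x = sig_f A y -> x = y.
Proof. unfold sig_f; intro H.
  rewrite <- (pc_stab A x (S x + S y)) in H by lia.
  rewrite <- (pc_stab A y (S x + S y)) in H by lia.
  apply (f_equal (partial_inv A (S x + S y))) in H; rewrite !pi_pc in H; auto. Qed.

Lemma sig_surj A : infinite_set (fun x => A x = false) -> forall y, exists x, sig_f A x = y.
Proof. intros Hinf y. destruct (Hinf y) as [M [HM HA]].
  exists (partial_inv A M y). set (x := partial_inv A M y).
  assert (Hx : partial_comp A M x = y) by apply pc_pi.
  assert (x <= M). { destruct (le_lt_dec x M); auto. rewrite pc_high in Hx by lia. lia. }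
  unfold sig_f. rewrite <- (pc_stab A x (S M)) by lia. simpl. rewrite HA. auto. Qed.

Lemma sig_GB A : bi_immune A -> GBf (sig_f A).
Proof. intro H; apply (GB_gen A); auto; apply sig_is. Qed.

Lemma sig_inv_GB A : bi_immune A ->
  GBf (fun y => epsilon (inhabits 0%nat) (fun x => sig_f A x = y)).
Proof. intro H. apply (GB_inv (sig_f A)). apply (sig_GB A H).
  - intro y. apply (epsilon_spec (inhabits 0%nat) (fun x => sig_f A x = y)).
    apply sig_surj. destruct H as [_ [H _]]; auto.
  - intro x. apply (sig_inj A).
    apply (epsilon_spec (inhabits 0%nat) (fun z => sig_f A z = sig_f A x)). eauto. Qed.

Lemma pc_id A m y : (forall z, z < m -> A z = false) -> partial_comp A m y = y.
Proof. revert y; induction m; intros y H; simpl; auto.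
  rewrite H by lia. apply IHm. intros; apply H; lia. Qed.

Lemma pc_add A i m x : (forall z, z <= i -> A z = false) -> S i <= m ->
  partial_comp (fun z => orb (Nat.eqb z i) (A z)) m x = swap i (partial_comp A m x).
Proof. intros HA Hm. revert x. induction Hm; intro x.
  - simpl. rewrite Nat.eqb_refl. simpl. rewrite HA by lia.
    rewrite pc_id. rewrite pc_id; auto. intros z Hz; apply HA; lia.
    intros z Hz. rewrite HA by lia. eqbs; auto; lia.
  - simpl. replace (m =? i) with false by (eqbs; auto; lia). simpl.
    destruct (A m); auto. Qed.

Definition tr (a b x : nat) := if Nat.eqb x a then b else if Nat.eqb x b then a else x.

Lemma strong_immune_bi (A : nat -> bool) :
  (forall W, ce W -> infinite_set W -> forall N,
     (exists z, N <= z /\ W z /\ A z = true) /\ (exists z, N <= z /\ W z /\ A z = false)) ->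
  forall (A' : nat -> bool) N, (forall z, N <= z -> A' z = A z) -> bi_immune A'.
Proof. intros H A' N HA.
  assert (Hall : ce (fun _ => True)).
  { exists PZero. intro x; split; auto. intros _; exists 0; constructor. }
  assert (Hinf : infinite_set (fun _ : nat => True)). { intro n; exists n; auto. }
  split; split.
  - intro n. destruct (H _ Hall Hinf (n + N)) as [[z [Hz [_ Hz']]] _].
    exists z; split; [lia|]. rewrite HA by lia; auto.
  - intros [W [HW [HWi HWA]]]. destruct (H W HW HWi N) as [_ [z [Hz [Wz Az]]]].
    specialize (HWA z Wz). rewrite HA in HWA by lia. congruence.
  - intro n. destruct (H _ Hall Hinf (n + N)) as [_ [z [Hz [_ Hz']]]].
    exists z; split; [lia|]. rewrite HA by lia; auto.
  - intros [W [HW [HWi HWA]]]. destruct (H W HW HWi N) as [[z [Hz [Wz Az]]] _].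
    specialize (HWA z Wz). rewrite HA in HWA by lia. congruence.
Qed.

Lemma swap_GB_from (A : nat -> bool) :
  (forall W, ce W -> infinite_set W -> forall N,
     (exists z, N <= z /\ W z /\ A z = true) /\ (exists z, N <= z /\ W z /\ A z = false)) ->
  forall i, GBf (swap i).
Proof. intros H i.
  set (B := fun z => andb (Nat.ltb i z) (A z)).
  set (B' := fun z => orb (Nat.eqb z i) (B z)).
  assert (HB : bi_immune B).
  { apply (strong_immune_bi A H B (S i)). intros z Hz; unfold B.
    replace (i <? z) with true; auto. symmetry; apply Nat.ltb_lt; lia. }
  assert (HB' : bi_immune B').
  { apply (strong_immune_bi A H B' (S i)). intros z Hz; unfold B', B.
    replace (i <? z) with true by (symmetry; apply Nat.ltb_lt; lia).
    replace (z =? i) with false by (eqbs; auto; lia). auto. }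
  assert (HBz : forall z, z <= i -> B z = false).
  { intros z Hz; unfold B. replace (i <? z) with false; auto.
    symmetry; apply Nat.ltb_ge; lia. }
  apply (GB_ext (fun y => sig_f B' (epsilon (inhabits 0%nat) (fun x => sig_f B x = y)))).
  - apply (GB_comp _ (sig_f B')). apply sig_inv_GB; auto. apply sig_GB; auto.
  - intro y. set (e := epsilon _ _).
    assert (He : sig_f B e = y).
    { apply (epsilon_spec (inhabits 0%nat) (fun x => sig_f B x = y)).
      apply sig_surj. destruct HB as [_ [HB _]]; auto. }
    rewrite <- He. unfold sig_f.
    rewrite <- (pc_stab B' e (S e + S i)) by lia.
    rewrite <- (pc_stab B e (S e + S i)) by lia.
    unfold B'. apply pc_add; auto; lia.
Qed.
Section Nested.
Variable P : prf -> Prop.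
Hypothesis H0 : P PZero.
Hypothesis H1 : P PSucc.
Hypothesis H2 : forall i, P (PProj i).
Hypothesis H3 : forall f gs, P f -> Forall P gs -> P (PComp f gs).
Hypothesis H4 : forall f g, P f -> P g -> P (PPrec f g).
Hypothesis H5 : forall f, P f -> P (PMu f).
Fixpoint prf_ind' (p : prf) : P p :=
  match p with
  | PZero => H0
  | PSucc => H1
  | PProj i => H2 i
  | PComp f gs => H3 f gs (prf_ind' f)
      ((fix go (l : list prf) : Forall P l :=
         match l with nil => Forall_nil P | g :: l' => Forall_cons g (prf_ind' g) (go l') end) gs)
  | PPrec f g => H4 f g (prf_ind' f) (prf_ind' g)
  | PMu f => H5 f (prf_ind' f)
  end.
End Nested.

Definition pr (a b : nat) := to_nat (a, b).
Arguments pr : simpl never.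

Fixpoint encode (p : prf) : nat :=
  match p with
  | PZero => pr (0) (0)
  | PSucc => pr (1) (0)
  | PProj i => pr (2) (i)
  | PComp f gs => pr 3 (pr (encode f)
      ((fix encl (l : list prf) : nat :=
         match l with nil => 0 | g :: l' => S (pr (encode g) (encl l')) end) gs))
  | PPrec f g => pr 4 (pr (encode f) (encode g))
  | PMu f => pr (5) (encode f)
  end.

Fixpoint encl (l : list prf) : nat :=
  match l with nil => 0 | g :: l' => S (pr (encode g) (encl l')) end.

Lemma encode_comp f gs : encode (PComp f gs) = pr 3 (pr (encode f) (encl gs)).
Proof. reflexivity. Qed.

Lemma to_nat_inj a b c d : pr (a) (b) = pr (c) (d) -> a = c /\ b = d.
Proof. unfold pr; intro H. apply (f_equal of_nat) in H. rewrite !cancel_of_to in H.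
  injection H; auto. Qed.

Lemma encode_inj p : forall q, encode p = encode q -> p = q.
Proof.
  induction p using prf_ind'; intros q Hq; destruct q;
    try rewrite encode_comp in Hq; simpl in Hq;
    try rewrite encode_comp in Hq;
    apply to_nat_inj in Hq; destruct Hq as [Ha Hb]; try discriminate; auto.
  - apply to_nat_inj in Hb; destruct Hb as [Hb Hc].
    f_equal; auto. revert l Hc. induction H as [|g gs Hg Hgs IH]; intros l Hc.
    + destruct l; simpl in Hc; auto; discriminate.
    + destruct l as [|g' l]; simpl in Hc; try discriminate.
      injection Hc; intro Hc'. apply to_nat_inj in Hc'. destruct Hc'.
      f_equal; auto.
  - apply to_nat_inj in Hb; destruct Hb. f_equal; auto.
  - f_equal; auto.
Qed.

Definition Wf (e : prf) (x : nat) : Prop := exists y, peval e (x :: nil) y.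
Definition dec (n : nat) : prf := epsilon (inhabits PZero) (fun p => encode p = n).

Lemma dec_encode p : dec (encode p) = p.
Proof. apply encode_inj. apply (epsilon_spec (inhabits PZero) (fun q => encode q = encode p)). eauto. Qed.

Definition prog (s : nat) : prf := dec (fst (of_nat s)).

Definition step (s b : nat) : nat * nat :=
  match excluded_middle_informative (infinite_set (Wf (prog s))) with
  | left _ => let x := epsilon (inhabits 0) (fun x => b < x /\ Wf (prog s) x) in
              (x, epsilon (inhabits 0) (fun y => x < y /\ Wf (prog s) y))
  | right _ => (S b, S (S b))
  end.

Lemma step_spec s b : b < fst (step s b) < snd (step s b) /\
  (infinite_set (Wf (prog s)) -> Wf (prog s) (fst (step s b)) /\ Wf (prog s) (snd (step s b))).
Proof. unfold step. destruct (excluded_middle_informative _) as [Hi|Hi]; simpl.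
  - set (x := epsilon _ (fun x => b < x /\ Wf (prog s) x)).
    assert (Hx : b < x /\ Wf (prog s) x).
    { apply (epsilon_spec (inhabits 0) (fun x => b < x /\ Wf (prog s) x)).
      destruct (Hi (S b)) as [m [Hm Wm]]. exists m; split; auto. }
    set (y := epsilon _ (fun y => x < y /\ Wf (prog s) y)).
    assert (Hy : x < y /\ Wf (prog s) y).
    { apply (epsilon_spec (inhabits 0) (fun y => x < y /\ Wf (prog s) y)).
      destruct (Hi (S x)) as [m [Hm Wm]]. exists m; split; auto. }
    repeat split; tauto.
  - split; [lia|tauto].
Qed.

Fixpoint bnd (s : nat) : nat := match s with 0 => 0 | S s' => snd (step s' (bnd s')) end.
Definition xs s := fst (step s (bnd s)).

Lemma bnd_mono s t : s <= t -> bnd s <= bnd t.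
Proof. induction 1; auto. simpl. destruct (step_spec m (bnd m)); lia. Qed.

Lemma bnd_ge s : s <= bnd s.
Proof. induction s; simpl; auto. destruct (step_spec s (bnd s)); lia. Qed.

Definition Abi (z : nat) : bool :=
  if excluded_middle_informative (exists s, xs s = z) then true else false.

Lemma Abi_x s : Abi (xs s) = true.
Proof. unfold Abi. destruct (excluded_middle_informative _) as [|n]; auto. exfalso; apply n; eauto. Qed.

Lemma Abi_y s : Abi (bnd (S s)) = false.
Proof. unfold Abi. destruct (excluded_middle_informative _) as [[t Ht]|]; auto.
  exfalso. unfold xs in Ht. simpl in Ht.
  destruct (le_lt_dec t s).
  - pose proof (bnd_mono (S t) (S s)). simpl in H. destruct (step_spec t (bnd t)). lia.
  - pose proof (bnd_mono (S s) t). simpl in H. destruct (step_spec t (bnd t)). lia.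
Qed.

Lemma Abi_strong : forall W, ce W -> infinite_set W -> forall N,
     (exists z, N <= z /\ W z /\ Abi z = true) /\ (exists z, N <= z /\ W z /\ Abi z = false).
Proof. intros W [e He] HWi N.
  set (s := pr (encode e) N).
  assert (Hs : N <= s) by (unfold s, pr; pose proof (to_nat_non_decreasing (encode e) N); lia).
  assert (Hp : prog s = e).
  { unfold prog, s, pr. rewrite cancel_of_to. simpl. apply dec_encode. }
  assert (Hinf : infinite_set (Wf (prog s))).
  { rewrite Hp. intro n. destruct (HWi n) as [m [Hm Wm]]. exists m; split; auto.
    apply He; auto. }
  destruct (step_spec s (bnd s)) as [Hlt Hw]. specialize (Hw Hinf).
  rewrite Hp in Hw. pose proof (bnd_ge s). split.
  - exists (xs s). unfold xs. split; [lia|]. split. apply He; tauto. apply Abi_x.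
  - exists (bnd (S s)). simpl. split; [lia|]. split. apply He; tauto.
    apply (Abi_y s).
Qed.

Lemma swap_GB i : GBf (swap i).
Proof. apply (swap_GB_from Abi Abi_strong). Qed.

Lemma tr_invol a b x : tr a b (tr a b x) = x.
Proof. unfold tr; eqbs; lia. Qed.

Lemma tr_a a b : tr a b a = b.
Proof. unfold tr; eqbs; lia. Qed.

Lemma tr_fix a b x : (x = a -> x = b) -> (x = b -> x = a) -> tr a b x = x.
Proof. intros H1 H2; unfold tr; eqbs; subst; auto; try lia. Qed.

Lemma tr_GB_lt a d : GBf (tr a (S a + d)).
Proof. induction d.
  - apply (GB_ext (swap a)). apply swap_GB. intro x; unfold tr, swap; eqbs; lia.
  - apply (GB_ext (fun x => swap (S a + d) (tr a (S a + d) (swap (S a + d) x)))).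
    + apply (GB_comp _ (swap (S a + d))). apply (GB_comp (swap (S a + d))); auto.
      apply swap_GB. apply swap_GB.
    + intro x. unfold tr, swap. eqbs; lia.
Qed.

Lemma tr_GB a b : GBf (tr a b).
Proof. destruct (lt_eq_lt_dec a b) as [[H|H]|H].
  - replace b with (S a + (b - S a)) by lia. apply tr_GB_lt.
  - subst. apply (GB_ext (fun x => x)). constructor. intro x; unfold tr; eqbs; lia.
  - apply (GB_ext (tr b a)). replace a with (S b + (a - S b)) by lia. apply tr_GB_lt.
    intro x; unfold tr; eqbs; lia.
Qed.

Lemma approx (s : perm) k : exists p q, GBf p /\ (forall x, p (q x) = x) /\ (forall x, q (p x) = x)
  /\ (forall i, i < k -> p i = fw s i /\ q i = bw s i).
Proof.
  pose proof (fw_bw s) as Hfb. pose proof (bw_fw s) as Hbf.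
  induction k.
  - exists (fun x => x), (fun x => x). repeat split; auto. constructor. lia. lia.
  - destruct IHk as [p [q [Gp [Hpq [Hqp Hk]]]]].
    set (a := p k). set (b := fw s k).
    set (p1 := fun x => tr a b (p x)). set (q1 := fun x => q (tr a b x)).
    assert (Hp1q1 : forall x, p1 (q1 x) = x).
    { intro x; unfold p1, q1; rewrite Hpq, tr_invol; auto. }
    assert (Hq1p1 : forall x, q1 (p1 x) = x).
    { intro x; unfold p1, q1; rewrite tr_invol, Hqp; auto. }
    assert (Hk1 : forall i, i <= k -> p1 i = fw s i).
    { intros i Hi. unfold p1. destruct (Nat.eq_dec i k).
      - subst i. unfold a. rewrite tr_a; auto.
      - destruct (Hk i) as [Hpi Hqi]; [lia|]. rewrite Hpi. apply tr_fix.
        + intro E. exfalso. unfold a in E. rewrite <- Hpi in E.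
          apply (f_equal q) in E. rewrite !Hqp in E. lia.
        + intro E. exfalso. unfold b in E. apply (f_equal (bw s)) in E. rewrite !Hbf in E. lia. }
    assert (Hk2 : forall i, i < k -> q1 i = bw s i).
    { intros i Hi. unfold q1. destruct (Hk i Hi) as [Hpi Hqi]. rewrite tr_fix; auto.
      + intro E. unfold b. unfold a in E.
        assert (Hq : q i = k) by (rewrite E; auto).
        rewrite Hqi in Hq. rewrite <- Hq. auto.
      + intro E. unfold b in E. unfold a.
        assert (Hb : bw s i = k) by (rewrite E; auto).
        rewrite <- Hqi in Hb. rewrite <- Hb, Hpq. auto. }
    set (c := q1 k). set (d := bw s k).
    exists (fun x => p1 (tr c d x)), (fun x => tr c d (q1 x)).
    split; [|split; [|split]].
    + apply (GB_comp (tr c d) p1). apply tr_GB. unfold p1. apply (GB_comp p (tr a b)); auto. apply tr_GB.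
    + intro x. rewrite tr_invol, Hp1q1. auto.
    + intro x. rewrite Hq1p1, tr_invol. auto.
    + intros i Hi. split.
      * rewrite tr_fix. apply Hk1; lia.
        -- intro E. unfold d. unfold c in E.
           assert (Hq : p1 i = k) by (rewrite E; auto).
           rewrite Hk1 in Hq by lia. rewrite <- Hq, Hbf. auto.
        -- intro E. unfold d in E. unfold c.
           assert (Hb : fw s i = k) by (rewrite E; auto).
           rewrite <- Hk1 in Hb by lia. rewrite <- Hb, Hq1p1. auto.
      * destruct (Nat.eq_dec i k).
        -- subst i. unfold c. apply tr_a.
        -- rewrite Hk2 by lia. apply tr_fix; intro E; exfalso.
           ++ unfold c in E. rewrite <- Hk2 in E by lia.
              apply (f_equal p1) in E. rewrite !Hp1q1 in E. lia.
           ++ unfold d in E. apply (f_equal (fw s)) in E. rewrite !Hfb in E. lia.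
Qed.

Lemma least_exists (f g : nat -> nat) i : f i <> g i ->
  exists j, f j <> g j /\ forall i, i < j -> f i = g i.
Proof. induction i as [i IH] using lt_wf_ind. intro Hi.
  destruct (classic (forall i', i' < i -> f i' = g i')) as [H|H]; eauto.
  apply not_all_ex_not in H. destruct H as [i' H].
  apply imply_to_and in H. destruct H. eauto. Qed.

Lemma pow_half_le j n : n <= j -> ((/2) ^ j <= (/2) ^ n)%R.
Proof. intro H. replace j with (n + (j - n)) by lia. rewrite pow_add.
  assert (0 <= (/2)^n)%R by (apply pow_le; lra).
  assert ((/2)^(j-n) <= 1)%R.
  { rewrite <- (pow1 (j - n)). apply pow_incr. lra. }
  assert (0 <= (/2)^(j-n))%R by (apply pow_le; lra). nra. Qed.

Lemma rho_small f g n : (forall i, i <= n -> f i = g i) -> (rho f g <= (/2) ^ (S n))%R.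
Proof. intro H. unfold rho. destruct (excluded_middle_informative _) as [[i Hi]|].
  - unfold least_diff.
    destruct (epsilon_spec (inhabits 0) (fun j => f j <> g j /\ forall i, i < j -> f i = g i)
      (least_exists f g i Hi)) as [Hj _].
    apply pow_half_le. destruct (le_lt_dec (epsilon (inhabits 0)
      (fun j => f j <> g j /\ forall i, i < j -> f i = g i)) n); auto.
    exfalso; apply Hj, H; auto.
  - apply pow_le; lra.
Qed.

Lemma dense (s : perm) (eps : R) : (eps > 0)%R -> exists t, G_B t /\ (d s t < eps)%R.
Proof. intro He.
  destruct (pow_lt_1_zero (/2) ltac:(rewrite Rabs_pos_eq; lra) eps He) as [N HN].
  destruct (approx s (S N)) as [p [q [Gp [Hpq [Hqp Hk]]]]].
  exists (Perm p q Hpq Hqp). split. exact Gp.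
  assert (Hlt : ((/2)^(S N) < eps)%R).
  { specialize (HN (S N) ltac:(lia)). rewrite Rabs_pos_eq in HN; auto. apply pow_le; lra. }
  unfold d; simpl. apply (Rle_lt_trans _ ((/2)^(S N))); auto.
  apply Rmax_lub; apply rho_small; intros i Hi; symmetry; apply Hk; lia.
Qed.

Theorem mainTheorem9 : closed_d G_B <-> (forall s : perm, G_B s).
Proof. split.
  - intros Hc s. destruct (classic (G_B s)) as [|Hn]; auto.
    destruct (Hc s Hn) as [eps [He Ht]].
    destruct (dense s eps He) as [t [Gt Hd]]. exfalso. apply (Ht t Hd Gt).
  - intros H s Hn. exfalso. apply Hn, H.
Qed.
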